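(* Let $0<\mu\le L$, $f\in\mathcal S^2_{\mu,L}(\mathbb R^n)$ with minimizer $x^*$, $\beta\in[0,1]$, $x_0\in\mathbb R^n$, and step size $0<s\le 1/L$. Let $X$ be the solution of the $\beta$-High Resolution ODE $$\ddot X+2\sqrt\mu\,\dot X+\beta\sqrt s\,\nabla^2 f(X)\dot X+(1+\sqrt{\mu s})\nabla f(X)=0,\quad X(0)=x_0,\ \dot X(0)=-\frac{2\sqrt s\,\nabla f(x_0)}{1+\sqrt{\mu s}}.$$ Then for all $t\ge0$, $$f(X(t))-f(x^* )\le\frac{3+(2-\beta)^2}{2s}\|x_0-x^*\|^2 e^{-\frac{\sqrt\mu}{4}t}.$$
   Context: $\mathcal S^2_{\mu,L}(\mathbb R^n)$ is the class of twice differentiable, $\mu$-strongly convex functions $f:\mathbb R^n\to\mathbb R$ (i.e. $f(y)\ge f(x)+\langle\nabla f(x),y-x\rangle+\frac\mu2\|y-x\|^2$) whose gradient is $L$-Lipschitz and whose Hessian is Lipschitz in Frobenius norm ($\|\nabla^2f(x)-\nabla^2f(y)\|_F\le L'\|x-y\|$ for some $L'>0$). *)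

(* Defs.v *)
From HB Require Import structures.
From mathcomp Require Import all_boot all_order all_algebra.
From mathcomp Require Import all_classical all_reals all_analysis.
Set Implicit Arguments. Unset Strict Implicit. Unset Printing Implicit Defensive.
Import Order.TTheory GRing.Theory Num.Theory.
Import numFieldNormedType.Exports.
Local Open Scope classical_set_scope.
Local Open Scope ring_scope.

Definition dotv {R : realType} {n : nat} (u v : 'rV[R]_n) : R :=
  \sum_(i < n) u 0 i * v 0 i.
Definition enorm {R : realType} {n : nat} (v : 'rV[R]_n) : R :=
  Num.sqrt (dotv v v).
Definition frob {R : realType} {n : nat} (A : 'M[R]_n) : R :=
  Num.sqrt (\sum_(i < n) \sum_(j < n) A i j ^+ 2).

Definition is_gradient {R : realType} {n : nat}
    (f : 'rV[R]_n -> R) (gradf : 'rV[R]_n -> 'rV[R]_n) : Prop :=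
  forall x, differentiable f x /\ forall v, 'd f x v = dotv (gradf x) v.

(* hessf is the Hessian of f (given its gradient gradf): gradf is
   differentiable at every x with differential v |-> hessf x * v
   (written for row vectors as v *m (hessf x)^T). *)
Definition is_hessian {R : realType} {n : nat}
    (gradf : 'rV[R]_n -> 'rV[R]_n) (hessf : 'rV[R]_n -> 'M[R]_n) : Prop :=
  forall x, differentiable gradf x /\
    forall v, 'd gradf x v = v *m (hessf x)^T.

Definition S2 {R : realType} {n : nat} (mu L : R) (f : 'rV[R]_n -> R)
    (gradf : 'rV[R]_n -> 'rV[R]_n) (hessf : 'rV[R]_n -> 'M[R]_n) : Prop :=
  [/\ is_gradient f gradf,
      is_hessian gradf hessf,
      (forall x y, f y >= f x + dotv (gradf x) (y - x) + mu / 2 * enorm (y - x) ^+ 2),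
      (forall x y, enorm (gradf x - gradf y) <= L * enorm (x - y)) &
      (exists L' : R, 0 < L' /\
         forall x y, frob (hessf x - hessf y) <= L' * enorm (x - y))].

Definition HR_solution {R : realType} {n : nat} (mu s beta : R)
    (gradf : 'rV[R]_n -> 'rV[R]_n) (hessf : 'rV[R]_n -> 'M[R]_n)
    (x0 : 'rV[R]_n) (X V : R -> 'rV[R]_n) : Prop :=
  [/\ X 0 = x0,
      V 0 = - ((2 * Num.sqrt s) / (1 + Num.sqrt (mu * s))) *: gradf x0,
      {within `[0, +oo[, continuous X},
      {within `[0, +oo[, continuous V} &
      (forall t : R, 0 < t ->
         [/\ is_derive t 1 X (V t),
             derivable V t 1 &
             'D_1 V t + (2 * Num.sqrt mu) *: V t
               + (beta * Num.sqrt s) *: (V t *m (hessf (X t))^T)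
               + (1 + Num.sqrt (mu * s)) *: gradf (X t) = 0])].

(* Main.v *)
Require Import Defs.
From HB Require Import structures.
From mathcomp Require Import all_boot all_order all_algebra.
From mathcomp Require Import all_classical all_reals all_analysis.
From mathcomp Require Import ring lra.
Import Order.TTheory GRing.Theory Num.Theory.
Import numFieldNormedType.Exports.
Local Open Scope classical_set_scope.
Local Open Scope ring_scope.

Ltac pos := repeat (first [apply: mulr_ge0 | apply: exprn_ge0 | apply: divr_ge0]); try lra.

Lemma decay_ineq (R : realType) (m b c P vv ww vhv pg gg QQ : R) :
  0 < m -> 0 <= b -> 1 <= c -> m * b <= 1 ->
  0 <= P -> 0 <= vv -> 0 <= gg -> 0 <= QQ -> 0 <= vhv ->
  P + m ^+ 2 / 2 * QQ <= pg ->
  ww <= 4 * vv + 4 * b ^+ 2 * gg + 2 * (2 * m) ^+ 2 * QQ ->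
  - ((2 * m) / 2) * vv - b / 2 * vhv - (2 * m) * c / 2 * pg - b * c / 2 * gg
    <= - (m / 4) * (c * P + 4^-1 * vv + 4^-1 * ww).
Proof.
move=> m0 b0 c1 mb P0 vv0 gg0 QQ0 vhv0 hp hw.
have f1 : 0 <= m * vv by pos.
have f2 : 0 <= m * c * P by pos.
have f3 : 0 <= m ^+ 3 * (c - 1) * QQ by pos.
have f4 : 0 <= gg * b * (2 * c - m * b) by pos.
have f5 : 0 <= b * vhv by pos.
have f6 : 0 <= m * c * (pg - P - m ^+ 2 / 2 * QQ) by pos.
have f7 : 0 <= m * (4 * vv + 4 * b ^+ 2 * gg + 2 * (2 * m) ^+ 2 * QQ - ww) by pos.
lra.
Qed.

Lemma poly_r (R : realType) (r : R) : 0 <= r -> r <= 1 ->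
  2 + 2 * r ^+ 2 * (1 + r) ^+ 2 <= 2 * (1 + r) * (1 + r) ^+ 2.
Proof.
move=> r0 r1.
have h2 : r ^+ 2 <= 1 by rewrite expr_le1.
have h3 : r ^+ 3 <= 1 by rewrite expr_le1.
have : 0 <= r * (3 + 2 * r - r ^+ 2 - r ^+ 3) by rewrite mulr_ge0 //; nra.
lra.
Qed.

Lemma E0_ineq (R : realType) (w m beta z c L P0 G p0 D : R) :
  0 < w -> 0 < m -> 0 <= beta <= 1 -> c = 1 + m * w -> m * w <= 1 -> z * c = 2 ->
  0 < L -> L * w ^+ 2 <= 1 ->
  0 <= P0 -> P0 <= L / 2 * D -> 0 <= G -> G <= L ^+ 2 * D -> 0 <= p0 -> 0 <= D ->
  c * P0 + 4^-1 * ((z * w) ^+ 2 * G)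
    + 4^-1 * ((beta * w - z * w) ^+ 2 * G + 2 * (2 * m) * (beta * w - z * w) * p0
              + (2 * m) ^+ 2 * D)
  <= c * ((3 + (2 - beta) ^+ 2) / (2 * w ^+ 2)) * D.
Proof.
move=> w0 m0 /andP[b0 b1] ce mw zc L0 Lw P00 P0L G0 GL p00 D0.
have r0 : 0 <= m * w by rewrite mulr_ge0 // ltW.
have c1 : 1 <= c by rewrite ce; lra.
have c2 : c <= 2 by rewrite ce; lra.
have cpos : 0 < c by lra.
have ze : z = 2 / c by rewrite -zc mulfK // gt_eqF.
have z1 : 1 <= z by rewrite ze ler_pdivlMr // mul1r.
have z2 : z <= 2 by rewrite ze ler_pdivrMr //; lra.
have w2 : 0 < w ^+ 2 by rewrite exprn_gt0.
set E := (X in X <= _).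
suff : 2 * w ^+ 2 * E <= c * (3 + (2 - beta) ^+ 2) * D.
  move=> h.
  have -> : c * ((3 + (2 - beta) ^+ 2) / (2 * w ^+ 2)) * D
      = (2 * w ^+ 2)^-1 * (c * (3 + (2 - beta) ^+ 2) * D).
    by field; rewrite gt_eqF.
  have p2 : 0 < 2 * w ^+ 2 by rewrite mulr_gt0.
  rewrite -(ler_pM2l p2) [X in _ <= X]mulrA mulfV ?mul1r //.
  by rewrite gt_eqF.
have Lw2 : 0 <= L * w ^+ 2 by rewrite mulr_ge0 // ltW.
have A1 : 2 * w ^+ 2 * (c * P0) <= c * D.
  have : c * (L * w ^+ 2) * D <= c * D.
    by rewrite -mulrA ler_pM2l ?(lt_le_trans ltr01) // ler_piMl.
  have : 2 * w ^+ 2 * (c * P0) <= 2 * w ^+ 2 * (c * (L / 2 * D)).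
    by rewrite ler_pM2l ?mulr_gt0 // ler_pM2l ?(lt_le_trans ltr01).
  have -> : 2 * w ^+ 2 * (c * (L / 2 * D)) = c * (L * w ^+ 2) * D by field.
  lra.
have GL2 : w ^+ 4 * G <= D.
  have : w ^+ 4 * G <= w ^+ 4 * (L ^+ 2 * D) by rewrite ler_pM2l ?exprn_gt0.
  have -> : w ^+ 4 * (L ^+ 2 * D) = (L * w ^+ 2) ^+ 2 * D by ring.
  have : (L * w ^+ 2) ^+ 2 * D <= D.
    rewrite ler_piMl // expr_le1 //.
  lra.
have A2 : 2 * w ^+ 2 * (4^-1 * ((z * w) ^+ 2 * G)) <= z ^+ 2 / 2 * D.
  have -> : 2 * w ^+ 2 * (4^-1 * ((z * w) ^+ 2 * G)) = z ^+ 2 / 2 * (w ^+ 4 * G) by field.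
  have zz : 0 < z ^+ 2 / 2 by rewrite divr_gt0 // exprn_gt0 //; lra.
  by rewrite ler_pM2l.
have bz : beta - z <= 0 by lra.
have A3 : 2 * w ^+ 2 * (4^-1 * ((beta * w - z * w) ^+ 2 * G)) <= (2 - beta) ^+ 2 / 2 * D.
  have -> : 2 * w ^+ 2 * (4^-1 * ((beta * w - z * w) ^+ 2 * G)) = (z - beta) ^+ 2 / 2 * (w ^+ 4 * G) by field.
  have h1 : (z - beta) ^+ 2 <= (2 - beta) ^+ 2.
    rewrite ler_sqr ?nnegrE; lra.
  have h2 : (z - beta) ^+ 2 / 2 * (w ^+ 4 * G) <= (z - beta) ^+ 2 / 2 * D.
    by rewrite ler_wpM2l // divr_ge0 // sqr_ge0.
  have h3 : (z - beta) ^+ 2 / 2 * D <= (2 - beta) ^+ 2 / 2 * D.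
    rewrite ler_wpM2r //; lra.
  lra.
have A4 : 2 * w ^+ 2 * (4^-1 * (2 * (2 * m) * (beta * w - z * w) * p0)) <= 0.
  have -> : 2 * w ^+ 2 * (4^-1 * (2 * (2 * m) * (beta * w - z * w) * p0))
     = (2 * w ^+ 3 * m * p0) * (beta - z) by field.
  have : 0 <= 2 * w ^+ 3 * m * p0 by pos.
  nra.
have A5 : 2 * w ^+ 2 * (4^-1 * ((2 * m) ^+ 2 * D)) = 2 * (m * w) ^+ 2 * D.
  by field.
have key : z ^+ 2 / 2 + 2 * (m * w) ^+ 2 <= 2 * c.
  (* c^2 * (z^2/2 + 2 r^2) = 2 + 2 r^2 c^2 <= 2 c^3 *)
  have zc2 : z ^+ 2 * c ^+ 2 = 4 by rewrite -exprMn zc; ring.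
  have poly : 2 + 2 * (m * w) ^+ 2 * c ^+ 2 <= 2 * c * c ^+ 2.
    by rewrite ce; apply: poly_r.
  have c20 : 0 < c ^+ 2 by rewrite exprn_gt0 // (lt_le_trans ltr01).
  rewrite -(ler_pM2r c20).
  have -> : (z ^+ 2 / 2 + 2 * (m * w) ^+ 2) * c ^+ 2
      = (z ^+ 2 * c ^+ 2) / 2 + 2 * (m * w) ^+ 2 * c ^+ 2 by field.
  rewrite zc2.
  lra.
have k2 : (2 - beta) ^+ 2 / 2 * D <= c * (2 - beta) ^+ 2 * D.
  have hb : 0 <= (2 - beta) ^+ 2 * D by rewrite mulr_ge0 // sqr_ge0.
  nra.
have k3 : (z ^+ 2 / 2 + 2 * (m * w) ^+ 2) * D <= 2 * c * D by rewrite ler_wpM2r.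
rewrite /E.
lra.
Qed.

Set Implicit Arguments.
Section S.
Context {R : realType} {n : nat}.
Implicit Types u v w : 'rV[R]_n.

Lemma dotvC u v : dotv u v = dotv v u.
Proof. by rewrite /dotv; apply: eq_bigr => i _; rewrite mulrC. Qed.

Lemma dotv_ge0 u : 0 <= dotv u u.
Proof. by rewrite /dotv; apply: sumr_ge0 => i _; rewrite -expr2 sqr_ge0. Qed.

Lemma dotvDl u v w : dotv (u + v) w = dotv u w + dotv v w.
Proof. by rewrite /dotv -big_split; apply: eq_bigr => i _; rewrite !mxE mulrDl. Qed.
Lemma dotvDr u v w : dotv w (u + v) = dotv w u + dotv w v.
Proof. by rewrite dotvC dotvDl !(dotvC w). Qed.
Lemma dotvZl (k : R) u w : dotv (k *: u) w = k * dotv u w.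
Proof. by rewrite /dotv mulr_sumr; apply: eq_bigr => i _; rewrite !mxE mulrA. Qed.
Lemma dotvZr (k : R) u w : dotv w (k *: u) = k * dotv w u.
Proof. by rewrite dotvC dotvZl dotvC. Qed.
Lemma dotvNl u w : dotv (- u) w = - dotv u w.
Proof. by rewrite -scaleN1r dotvZl mulN1r. Qed.
Lemma dotvNr u w : dotv w (- u) = - dotv w u.
Proof. by rewrite dotvC dotvNl dotvC. Qed.
Lemma dotvBl u v w : dotv (u - v) w = dotv u w - dotv v w.
Proof. by rewrite dotvDl dotvNl. Qed.
Lemma dotvBr u v w : dotv w (u - v) = dotv w u - dotv w v.
Proof. by rewrite dotvDr dotvNr. Qed.
Lemma dotv0l w : dotv 0 w = 0.
Proof. by rewrite /dotv big1 // => i _; rewrite mxE mul0r. Qed.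
Lemma dotv0r w : dotv w 0 = 0.
Proof. by rewrite dotvC dotv0l. Qed.

Lemma enorm_sq v : enorm v ^+ 2 = dotv v v.
Proof. by rewrite /enorm sqr_sqrtr // dotv_ge0. Qed.

Lemma young u v (l : R) : 0 < l -> 2 * dotv u v <= l * dotv u u + l^-1 * dotv v v.
Proof.
move=> l0.
have := dotv_ge0 (l *: u - v).
rewrite !(dotvBl, dotvBr, dotvZl, dotvZr) (dotvC v u) => h.
have il0 : 0 <= l^-1 by rewrite invr_ge0 ltW.
move: h; set uu := dotv u u; set uv := dotv u v; set vv := dotv v v => h.
clearbody uu uv vv. have e : l * uu + l^-1 * vv - 2 * uv = l^-1 * (l * (l * uu - uv) - (l * uv - vv)).
  by field; rewrite (gt_eqF l0).
have := mulr_ge0 il0 h; rewrite -e; lra.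
Qed.

Lemma dotv_eq0 v : dotv v v = 0 -> v = 0.
Proof.
rewrite /dotv => /eqP; rewrite psumr_eq0 => [/allP h|i _]; last by rewrite -expr2 sqr_ge0.
apply/rowP => i; rewrite mxE.
by have := h i (mem_index_enum _); rewrite /= -expr2 sqrf_eq0 => /eqP.
Qed.

Lemma is_derive_chain {W : normedModType R} (F : 'rV[R]_n -> W) (g : R -> 'rV[R]_n) (t : R) g' :
  differentiable F (g t) -> is_derive t 1 g g' -> is_derive t 1 (F \o g) ('d F (g t) g').
Proof.
move=> dF dg.
have dg' : differentiable g t by apply/derivable1_diffP; exact: ex_derive.
have dFg : differentiable (F \o g) t by apply: differentiable_comp.
apply: DeriveDef; first exact: diff_derivable.
rewrite deriveE // diff_comp //=; congr ('d F (g t) _).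
by rewrite -deriveE // (@derive_val _ _ _ _ _ _ _ dg).
Qed.

Lemma is_derive_coord (u : R -> 'rV[R]_n) (t : R) u' (i : 'I_n) :
  is_derive t 1 u u' -> is_derive t 1 (fun s => u s 0 i) (u' 0 i).
Proof.
move=> du.
have du1 := @ex_derive _ _ _ _ _ _ _ du.
apply: DeriveDef; first exact: ((derivable_mxP _ _ _).1 du1 0 i).
by rewrite -(@derive_val _ _ _ _ _ _ _ du) derive_mx // mxE.
Qed.

Lemma is_derive_dotv (u v : R -> 'rV[R]_n) (t : R) u' v' :
  is_derive t 1 u u' -> is_derive t 1 v v' ->
  is_derive t 1 (fun s => dotv (u s) (v s)) (dotv u' (v t) + dotv (u t) v').
Proof.
move=> du dv.
have -> : (fun s => dotv (u s) (v s)) = \sum_(i < n) (fun s => u s 0 i * v s 0 i).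
  by rewrite fct_sumE; apply/funext => s.
apply: is_derive_eq.
  apply: is_derive_sum => i.
  have h : is_derive t 1 (fun s => u s 0 i * v s 0 i) (u t 0 i *: v' 0 i + v t 0 i *: u' 0 i)
    := (is_deriveM (is_derive_coord i du) (is_derive_coord i dv)).
  exact: h.
rewrite /dotv -big_split /=.
apply: eq_bigr => i _.
rewrite addrC mulrC; congr (_ + _); rewrite mulrC //.
Qed.


Lemma is_deriveD' {W : normedModType R} (f g : R -> W) (t : R) df dg :
  is_derive t 1 f df -> is_derive t 1 g dg -> is_derive t 1 (fun s => f s + g s) (df + dg).
Proof. move=> h1 h2; exact: (is_deriveD h1 h2). Qed.

Lemma is_deriveB' {W : normedModType R} (f g : R -> W) (t : R) df dg :
  is_derive t 1 f df -> is_derive t 1 g dg -> is_derive t 1 (fun s => f s - g s) (df - dg).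
Proof. move=> h1 h2; exact: (is_deriveB h1 h2). Qed.

Lemma is_deriveZ' {W : normedModType R} (f : R -> W) (k t : R) df :
  is_derive t 1 f df -> is_derive t 1 (fun s => k *: f s) (k *: df).
Proof. move=> h1; exact: (is_deriveZ k h1). Qed.

Lemma is_deriveM' (f g : R -> R) (t : R) df dg :
  is_derive t 1 f df -> is_derive t 1 g dg -> is_derive t 1 (fun s => f s * g s) (f t * dg + g t * df).
Proof. move=> h1 h2; exact: (is_deriveM h1 h2). Qed.

Lemma is_derive_cst' {W : normedModType R} (a : W) (t : R) : is_derive t 1 (fun _ : R => a) 0.
Proof. exact: is_derive_cst. Qed.

Lemma is_derive_id' (t : R) : is_derive t 1 (fun s : R => s) 1.
Proof. exact: is_derive_id. Qed.

Lemma is_derive_line (x d : 'rV[R]_n) (t : R) : is_derive t 1 (fun s : R => x + s *: d) d.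
Proof.
have hd := is_diff_scalel t d.
have e : is_derive t 1 ( *:%R ^~ d) d.
  apply: DeriveDef; first exact: diff_derivable (@ex_diff _ _ _ _ _ _ _ hd).
  by rewrite deriveE ?(@diff_val _ _ _ _ _ _ _ hd) ?scale1r //; exact: (@ex_diff _ _ _ _ _ _ _ hd).
have h : is_derive t 1 (fun s : R => x + s *: d) (0 + d) := is_deriveD' (is_derive_cst' x t) e.
by rewrite add0r in h.
Qed.

Lemma lip_sq (gradf : 'rV[R]_n -> 'rV[R]_n) (L : R) x y :
  (forall x y, enorm (gradf x - gradf y) <= L * enorm (x - y)) ->
  dotv (gradf x - gradf y) (gradf x - gradf y) <= L ^+ 2 * dotv (x - y) (x - y).
Proof.
move=> hL; have h := hL x y.
have h0 : 0 <= enorm (gradf x - gradf y) by rewrite /enorm sqrtr_ge0.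
have := ler_pM h0 h0 h h.
by rewrite -!enorm_sq -!expr2 exprMn.
Qed.

Lemma descent (f : 'rV[R]_n -> R) gradf (L : R) (x d : 'rV[R]_n) :
  is_gradient f gradf -> 0 < L ->
  (forall x y, enorm (gradf x - gradf y) <= L * enorm (x - y)) ->
  f (x + d) <= f x + dotv (gradf x) d + L / 2 * dotv d d.
Proof.
move=> hg L0 hL.
set A := dotv (gradf x) d; set B := dotv d d.
pose psi := fun s : R => f (x + s *: d) - (s * A + L / 2 * B * (s * s)).
have dpsi : forall s : R, is_derive s 1 psi
    (dotv (gradf (x + s *: d)) d - (A + L * B * s)).
  move=> s.
  have h1 : is_derive s 1 (f \o (fun s : R => x + s *: d)) ('d f (x + s *: d) d).
    by apply: is_derive_chain; [exact: (hg _).1 | exact: is_derive_line].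
  rewrite (hg _).2 in h1.
  have h2 : is_derive s 1 (fun s : R => s * A) (s * 0 + A * 1)
    := is_deriveM' (is_derive_id' s) (is_derive_cst' A s).
  have h3 : is_derive s 1 (fun s : R => s * s) (s * 1 + s * 1)
    := is_deriveM' (is_derive_id' s) (is_derive_id' s).
  have h4 := is_deriveM' (is_derive_cst' (L / 2 * B) s) h3.
  have h5 := is_deriveD' h2 h4.
  have h6 := is_deriveB' h1 h5.
  have h7 : is_derive s 1 psi (dotv (gradf (x + s *: d)) d -
     (s * 0 + A * 1 + (L / 2 * B * (s * 1 + s * 1) + s * s * 0))) := h6.
  suff -> : A + L * B * s = s * 0 + A * 1 + (L / 2 * B * (s * 1 + s * 1) + s * s * 0) by [].
  by field.
have dpsi_le : forall s, 0 < s -> dotv (gradf (x + s *: d)) d - (A + L * B * s) <= 0.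
  move=> s s0.
  set w := gradf (x + s *: d) - gradf x.
  have hw : dotv w w <= L ^+ 2 * (s ^+ 2 * B).
    have := @lip_sq gradf L (x + s *: d) x hL.
    rewrite (_ : x + s *: d - x = s *: d); last by rewrite addrC addKr.
    by rewrite dotvZl dotvZr [s ^+ 2]expr2 !mulrA.
  have Ls0 : 0 < L * s by rewrite mulr_gt0.
  have il0 : 0 < (L * s)^-1 by rewrite invr_gt0.
  have hy := @young w d _ il0.
  rewrite invrK -/B in hy.
  have e1 : dotv w d = dotv (gradf (x + s *: d)) d - A by rewrite /w dotvBl.
  have hw2 : (L * s)^-1 * dotv w w <= (L * s)^-1 * (L ^+ 2 * (s ^+ 2 * B)).
    by rewrite ler_wpM2l // invr_ge0 ltW.
  have e2 : (L * s)^-1 * (L ^+ 2 * (s ^+ 2 * B)) = L * s * B.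
    by field; rewrite !gt_eqF.
  lra.
have cont : {within `[0, 1], continuous psi}.
  apply: derivable_within_continuous => s _; exact: (@ex_derive _ _ _ _ _ _ _ (dpsi s)).
have := @ler0_derive1_le_cc R psi 0 1.
move=> /(_ (fun s _ => @ex_derive _ _ _ _ _ _ _ (dpsi s))).
have dle : forall s, s \in `]0, 1[ -> derive1 psi s <= 0.
  move=> s; rewrite in_itv /= => /andP[s0 _].
  by rewrite derive1E (@derive_val _ _ _ _ _ _ _ (dpsi s)) dpsi_le.
move=> /(_ dle cont 1 0).
have i1 : (1:R) \in `[0, 1] by rewrite in_itv /= ler01 lexx.
have i0 : (0:R) \in `[0, 1] by rewrite in_itv /= ler01 lexx.
move=> /(_ i1 i0 ler01).
rewrite /psi scale0r addr0 scale1r !mul0r !mul1r !mulr0 !addr0 !mulr1 subr0.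
move=> h; lra.
Qed.

Lemma grad_min (f : 'rV[R]_n -> R) gradf (L : R) (xs : 'rV[R]_n) :
  is_gradient f gradf -> 0 < L ->
  (forall x y, enorm (gradf x - gradf y) <= L * enorm (x - y)) ->
  (forall y, f xs <= f y) -> gradf xs = 0.
Proof.
move=> hg L0 hL hmin.
set g := gradf xs.
have := descent L xs (- (L^-1 *: g)) hg L0 hL.
rewrite -/g !(dotvNr, dotvNl, opprK, dotvZl, dotvZr).
have := hmin (xs + - (L^-1 *: g)).
have := dotv_ge0 g.
set gg := dotv g g => h0 h1 h2.
have e : L / 2 * (L^-1 * (L^-1 * gg)) = (2 * L)^-1 * gg.
  by field; rewrite gt_eqF.
have e2 : f xs + - (L^-1 * gg) + (2 * L)^-1 * gg = f xs - (2 * L)^-1 * gg.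
  by field; rewrite gt_eqF.
rewrite e e2 in h2.
have h3 : (2 * L)^-1 * gg <= 0 by lra.
have h4 : 0 < (2 * L)^-1 by rewrite invr_gt0 mulr_gt0.
apply: dotv_eq0; apply/eqP; rewrite eq_le h0 andbT.
by rewrite -(pmulr_rle0 _ h4).
Qed.

Lemma grad_mono (f : 'rV[R]_n -> R) gradf (mu : R) x y :
  0 <= mu ->
  (forall x y, f y >= f x + dotv (gradf x) (y - x) + mu / 2 * enorm (y - x) ^+ 2) ->
  0 <= dotv (gradf y - gradf x) (y - x).
Proof.
move=> mu0 hc.
have h1 := hc x y; have h2 := hc y x.
have e : x - y = - (y - x) by rewrite opprB.
rewrite e dotvNr in h2.
have n1 : 0 <= mu / 2 * enorm (y - x) ^+ 2 by rewrite mulr_ge0 ?divr_ge0 // sqr_ge0.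
have n2 : 0 <= mu / 2 * enorm (- (y - x)) ^+ 2 by rewrite mulr_ge0 ?divr_ge0 // sqr_ge0.
rewrite dotvBl; lra.
Qed.

Lemma hess_psd (f : 'rV[R]_n -> R) gradf hessf (mu : R) (x v : 'rV[R]_n) :
  is_gradient f gradf -> is_hessian gradf hessf -> 0 <= mu ->
  (forall x y, f y >= f x + dotv (gradf x) (y - x) + mu / 2 * enorm (y - x) ^+ 2) ->
  0 <= dotv v (v *m (hessf x)^T).
Proof.
move=> hg hH mu0 hc.
pose h := fun s : R => dotv (gradf (x + s *: v)) v.
have dh : forall s : R, is_derive s 1 h (dotv (v *m (hessf (x + s *: v))^T) v).
  move=> s.
  have h1 : is_derive s 1 (gradf \o (fun s : R => x + s *: v)) ('d gradf (x + s *: v) v).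
    by apply: is_derive_chain; [exact: (hH _).1 | exact: is_derive_line].
  rewrite (hH _).2 in h1.
  have h2 := is_derive_dotv h1 (is_derive_cst' v s).
  have h3 : is_derive s 1 h (dotv (v *m (hessf (x + s *: v))^T) v + dotv (gradf (x + s *: v)) 0) := h2.
  by rewrite dotv0r addr0 in h3.
rewrite dotvC; apply/ler_addgt0Pl => e e0.
pose he := fun s : R => h s + e * s.
have dhe : forall s : R, is_derive s 1 he (dotv (v *m (hessf (x + s *: v))^T) v + (e * 1 + s * 0)).
  move=> s; exact: (is_deriveD' (dh s) (is_deriveM' (is_derive_cst' e s) (is_derive_id' s))).
have := @incr_derive1_ge0_itv R he true false (-1) 1 0.
move=> /(_ (fun s _ => @ex_derive _ _ _ _ _ _ _ (dhe s))).
have homo : {in `[-1, 1] &, {homo he : a b / a < b}}.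
  move=> a b _ _ ab; rewrite /he /h.
  have := @grad_mono f gradf mu (x + a *: v) (x + b *: v) mu0 hc.
  have -> : x + b *: v - (x + a *: v) = (b - a) *: v.
    by rewrite opprD addrACA subrr add0r scalerBl.
  rewrite dotvZr pmulr_rge0 ?subr_gt0 // dotvBl => hm.
  have : 0 < e * (b - a) by rewrite mulr_gt0 // subr_gt0.
  lra.
move=> /(_ homo).
have i0 : (0:R) \in `]-1, 1[ by rewrite in_itv /= ltr01 andbT ltrN10.
move=> /(_ i0).
rewrite derive1E (@derive_val _ _ _ _ _ _ _ (dhe 0)) scale0r addr0.
by rewrite mulr1 mulr0 addr0 addrC.
Qed.

Lemma cvg_dotv {T : Type} (F : set_system T) {FF : Filter F} (u v : T -> 'rV[R]_n) u0 v0 :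
  u @ F --> u0 -> v @ F --> v0 -> (fun s => dotv (u s) (v s)) @ F --> dotv u0 v0.
Proof.
move=> hu hv.
rewrite /dotv.
apply: cvg_big => //.
  exact: add_continuous.
move=> i _ /=.
apply: cvgM.
  exact: (continuous_cvg _ (@coord_continuous R 1 n 0 i u0) hu).
exact: (continuous_cvg _ (@coord_continuous R 1 n 0 i v0) hv).
Qed.

Lemma dotv_par u v : dotv (u + v) (u + v) <= 2 * dotv u u + 2 * dotv v v.
Proof.
have h := dotv_ge0 (u - v).
have e : dotv (u + v) (u + v) + dotv (u - v) (u - v) = 2 * dotv u u + 2 * dotv v v.
  rewrite /dotv -big_split !mulr_sumr -big_split; apply: eq_bigr => i _.
  rewrite !mxE /=; ring.
lra.
Qed.

Lemma dotv_W_le (x d g : 'rV[R]_n) (a b : R) :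
  dotv (x + a *: d + b *: g) (x + a *: d + b *: g)
    <= 4 * dotv x x + 4 * b ^+ 2 * dotv g g + 2 * a ^+ 2 * dotv d d.
Proof.
rewrite -addrA (addrC (a *: d)) addrA.
have h1 := dotv_par (x + b *: g) (a *: d).
have h2 := dotv_par x (b *: g).
rewrite !dotvZl !dotvZr in h1 h2.
lra.
Qed.
End S.


Unset Implicit Arguments.

Theorem theorem4p1 (R : realType) (n : nat) (mu L : R)
    (f : 'rV[R]_n -> R) (gradf : 'rV[R]_n -> 'rV[R]_n) (hessf : 'rV[R]_n -> 'M[R]_n)
    (xstar x0 : 'rV[R]_n) (beta s : R) (X V : R -> 'rV[R]_n) :
  0 < mu -> mu <= L ->
  S2 mu L f gradf hessf ->
  (forall y, f xstar <= f y) ->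
  0 <= beta <= 1 ->
  0 < s -> s <= L^-1 ->
  HR_solution mu s beta gradf hessf x0 X V ->
  forall t : R, 0 <= t ->
    f (X t) - f xstar <=
      (3 + (2 - beta) ^+ 2) / (2 * s) * enorm (x0 - xstar) ^+ 2
        * expR (- (Num.sqrt mu / 4) * t).
Proof.
move=> mu0 muL [hg hH hc hL _] hmin /andP[b0 b1] s0 sL [X0 V0 cX cV hode] t t0.
have L0 : 0 < L := lt_le_trans mu0 muL.
have gs0 : gradf xstar = 0 := grad_min L xstar hg L0 hL hmin.
have rmw : Num.sqrt (mu * s) = Num.sqrt mu * Num.sqrt s by rewrite sqrtrM // ltW.
rewrite rmw in V0 hode.
set m := Num.sqrt mu in V0 hode *.
set w := Num.sqrt s in V0 hode *.
have m0 : 0 < m by rewrite sqrtr_gt0.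
have w0 : 0 < w by rewrite sqrtr_gt0.
have mm : m ^+ 2 = mu by rewrite sqr_sqrtr // ltW.
have ww : w ^+ 2 = s by rewrite sqr_sqrtr // ltW.
clearbody m w.
subst mu s.
have Lw : L * w ^+ 2 <= 1.
  by have := ler_wpM2l (ltW L0) sL; rewrite mulfV ?gt_eqF.
have mw1 : m * w <= 1.
  have h : (m * w) ^+ 2 <= 1.
    have h1 : m ^+ 2 * w ^+ 2 <= L * w ^+ 2.
      by apply: ler_wpM2r => //; rewrite exprn_ge0 // ltW.
    by rewrite exprMn; apply: le_trans h1 Lw.
  have mw0 : 0 <= m * w by rewrite mulr_ge0 // ltW.
  move: h mw0; move: (m * w) => r h r0; nra.
pose W := fun u : R => V u + (2 * m) *: (X u - xstar) + (beta * w) *: gradf (X u).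
pose E := fun u : R => (1 + m * w) * (f (X u) - f xstar) + 4^-1 * dotv (V u) (V u)
                   + 4^-1 * dotv (W u) (W u).
pose Ed := fun u : R =>
    (- ((2 * m) / 2) * dotv (V u) (V u)
     - (beta * w) / 2 * dotv (V u) (V u *m (hessf (X u))^T)
     - (2 * m) * (1 + m * w) / 2 * dotv (X u - xstar) (gradf (X u))
     - (beta * w) * (1 + m * w) / 2 * dotv (gradf (X u)) (gradf (X u))).
have dE : forall u : R, 0 < u -> is_derive u 1 E (Ed u).
  move=> u u0; have [dX dV ode] := hode u u0.
  set HV := V u *m (hessf (X u))^T in ode *.
  have eD : 'D_1 V u = - ((2 * m) *: V u + ((beta * w) *: HV + (1 + m * w) *: gradf (X u))).
    by apply/eqP; rewrite -addr_eq0 !addrA; apply/eqP.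
  have dV' : is_derive u 1 V (- ((2 * m) *: V u + ((beta * w) *: HV + (1 + m * w) *: gradf (X u)))).
    by rewrite -eD; exact: derivableP.
  have dG : is_derive u 1 (fun u => gradf (X u)) HV.
    have h := is_derive_chain (hH (X u)).1 dX.
    rewrite (hH (X u)).2 in h; exact: h.
  have dF : is_derive u 1 (fun u => f (X u)) (dotv (gradf (X u)) (V u)).
    have h := is_derive_chain (hg (X u)).1 dX.
    rewrite (hg (X u)).2 in h; exact: h.
  have dW : is_derive u 1 W
     (- ((2 * m) *: V u + ((beta * w) *: HV + (1 + m * w) *: gradf (X u)))
       + (2 * m) *: (V u - 0) + (beta * w) *: HV)
    := is_deriveD' (is_deriveD' dV' (is_deriveZ' (2 * m) (is_deriveB' dX (is_derive_cst' xstar u))))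
         (is_deriveZ' (beta * w) dG).
  have eW : - ((2 * m) *: V u + ((beta * w) *: HV + (1 + m * w) *: gradf (X u)))
       + (2 * m) *: (V u - 0) + (beta * w) *: HV = - ((1 + m * w) *: gradf (X u)).
    by apply/rowP => i; rewrite !mxE; ring.
  rewrite eW in dW.
  have dVV := is_derive_dotv dV' dV'.
  have dWW := is_derive_dotv dW dW.
  have dP := is_deriveB' dF (is_derive_cst' (f xstar) u).
  have dE1 := is_deriveD' (is_deriveD' (is_deriveZ' (1 + m * w) dP) (is_deriveZ' 4^-1 dVV))
                 (is_deriveZ' 4^-1 dWW).
  apply: (is_derive_eq (f := E) dE1).
  rewrite /W /Ed /GRing.scale /=.
  rewrite !(dotvDl, dotvDr, dotvNl, dotvNr, dotvZl, dotvZr, dotvBl, dotvBr).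
  rewrite (dotvC (gradf (X u)) (X u)) (dotvC (gradf (X u)) xstar) (dotvC (gradf (X u)) (V u)).
  rewrite (dotvC HV (V u)).
  by field.
have c1 : 1 <= 1 + m * w by rewrite lerDl mulr_ge0 // ltW.
have bw0 : 0 <= beta * w by rewrite mulr_ge0 // ltW.
have mbw : m * (beta * w) <= 1.
  by rewrite mulrCA; apply: (le_trans _ mw1); rewrite ger_pMl ?mulr_gt0.
have Ele : forall u : R, 0 < u -> Ed u <= - (m / 4) * E u.
  move=> u u0.
  have P0 : 0 <= f (X u) - f xstar by rewrite subr_ge0.
  have vhv := hess_psd (m ^+ 2) (X u) (V u) hg hH (ltW mu0) hc.
  have hpg : (f (X u) - f xstar) + m ^+ 2 / 2 * dotv (X u - xstar) (X u - xstar)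
             <= dotv (X u - xstar) (gradf (X u)).
    have := hc (X u) xstar.
    rewrite enorm_sq -opprB !(dotvNl, dotvNr, opprK) (dotvC (gradf (X u))).
    lra.
  have hw := dotv_W_le (V u) (X u - xstar) (gradf (X u)) (2 * m) (beta * w).
  exact: (@decay_ineq R m (beta * w) (1 + m * w) _ _ _ _ _ _ _ m0 bw0 c1 mbw P0
            (dotv_ge0 _) (dotv_ge0 _) (dotv_ge0 _) vhv hpg hw).
pose k := m / 4.
pose F := fun u : R => E u * expR (k * u).
have dF : forall u : R, 0 < u ->
    is_derive u 1 F (E u * (expR (k * u) * (k * 1 + u * 0)) + expR (k * u) * Ed u).
  move=> u u0.
  have dl : is_derive u 1 (fun u : R => k * u) (k * 1 + u * 0)
    := is_deriveM' (is_derive_cst' k u) (is_derive_id' u).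
  have dex : is_derive u 1 (fun u : R => expR (k * u)) (expR (k * u) * (k * 1 + u * 0))
    := is_derive1_comp (is_derive_expR (k * u)) dl.
  exact: (is_deriveM' (dE u u0) dex).
have Fle : forall u : R, u \in `]0, +oo[ -> derive1 F u <= 0.
  move=> u; rewrite in_itv /= andbT => u0.
  rewrite derive1E (@derive_val _ _ _ _ _ _ _ (dF u u0)) mulr1 mulr0 addr0.
  have ex := expR_gt0 (k * u).
  have h := Ele u u0.
  have -> : E u * (expR (k * u) * k) + expR (k * u) * Ed u
     = expR (k * u) * (Ed u + k * E u) by ring.
  rewrite pmulr_rle0 //; rewrite /k; lra.
have Fder : forall u : R, u \in `]0, +oo[ -> derivable F u 1.
  move=> u; rewrite in_itv /= andbT => u0.
  exact: (@ex_derive _ _ _ _ _ _ _ (dF u u0)).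
have cF : {within `[0, +oo[, continuous F}.
  apply/subspace_continuousP => x hx.
  have hX := (subspace_continuousP _ X).1 cX x hx.
  have hV := (subspace_continuousP _ V).1 cV x hx.
  have FF : Filter (within [set` `[0, +oo[%R] (nbhs x)) := within_filter _ (nbhs_filter x).
  have hfX := @continuous_cvg _ _ _ _ (within_filter _ (nbhs_filter x)) X f (X x) (differentiable_continuous (hg (X x)).1) hX.
  have hgX := @continuous_cvg _ _ _ _ (within_filter _ (nbhs_filter x)) X gradf (X x) (differentiable_continuous (hH (X x)).1) hX.
  have hW : W u @[u --> within [set` `[0, +oo[%R] (nbhs x)] --> W x.
    rewrite /W; apply: cvgD; first apply: cvgD.
    - exact: hV.
    - apply: cvgZ; first exact: cvg_cst.
      apply: cvgB; first exact: hX.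
      exact: cvg_cst.
    - apply: cvgZ; first exact: cvg_cst.
      exact: hgX.
  have hE : E u @[u --> within [set` `[0, +oo[%R] (nbhs x)] --> E x.
    rewrite /E; apply: cvgD; first apply: cvgD.
    - apply: cvgM; first exact: cvg_cst.
      apply: cvgB; first exact: hfX.
      exact: cvg_cst.
    - apply: cvgM; first exact: cvg_cst.
      exact: (cvg_dotv hV hV).
    - apply: cvgM; first exact: cvg_cst.
      exact: (cvg_dotv hW hW).
  have hid : (fun u : R => u) @ within [set` `[0, +oo[%R] (nbhs x) --> x by exact: cvg_within.
  have hexp : expR (k * u) @[u --> within [set` `[0, +oo[%R] (nbhs x)] --> expR (k * x)
    := continuous_cvg (within_filter _ (nbhs_filter x)) (@continuous_expR R (k * x)) (cvgM (cvg_cst (k)) hid).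
  rewrite /F; apply: cvgM; [exact: hE | exact: hexp].
have Fmono := ler0_derive1_nincry Fder Fle cF.
have hFt : F t <= F 0 := Fmono 0 t (lexx 0) t0.
rewrite /F mulr0 expR0 mulr1 in hFt.
set ex := expR (- (m / 4) * t).
have ex0 : 0 < ex := expR_gt0 _.
have hmul : expR (k * t) * ex = 1.
  by rewrite /ex -expRD /k mulNr subrr expR0.
have Et : E t <= E 0 * ex.
  have := ler_wpM2r (ltW ex0) hFt.
  by rewrite -mulrA hmul mulr1.
have cpos : 0 < 1 + m * w by lra.
have cP : (1 + m * w) * (f (X t) - f xstar) <= E t.
  rewrite /E; have := dotv_ge0 (V t); have := dotv_ge0 (W t); lra.
set z := 2 / (1 + m * w).
have zc : z * (1 + m * w) = 2 by rewrite /z mulfVK // gt_eqF.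
have idE : forall g e : 'rV[R]_n,
    dotv (- (2 * w / (1 + m * w)) *: g) (- (2 * w / (1 + m * w)) *: g) = (z * w) ^+ 2 * (dotv g g) /\
    dotv (- (2 * w / (1 + m * w)) *: g + (2 * m) *: e + (beta * w) *: g)
         (- (2 * w / (1 + m * w)) *: g + (2 * m) *: e + (beta * w) *: g)
      = (beta * w - z * w) ^+ 2 * dotv g g + 2 * (2 * m) * (beta * w - z * w) * dotv g e
        + (2 * m) ^+ 2 * dotv e e.
  move=> g e.
  rewrite !(dotvDl, dotvDr, dotvNl, dotvNr, dotvZl, dotvZr) (dotvC e g).
  by split; rewrite /z; field; rewrite gt_eqF.
have [h1 h2] := idE (gradf x0) (x0 - xstar).
have E0e : E 0 = (1 + m * w) * (f x0 - f xstar) + 4^-1 * ((z * w) ^+ 2 * dotv (gradf x0) (gradf x0))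
    + 4^-1 * ((beta * w - z * w) ^+ 2 * dotv (gradf x0) (gradf x0)
              + 2 * (2 * m) * (beta * w - z * w) * dotv (gradf x0) (x0 - xstar)
              + (2 * m) ^+ 2 * dotv (x0 - xstar) (x0 - xstar)).
  by rewrite /E /W /= X0 V0 h1 h2.
have P00 : 0 <= f x0 - f xstar by rewrite subr_ge0.
have P0L : f x0 - f xstar <= L / 2 * dotv (x0 - xstar) (x0 - xstar).
  have := descent L xstar (x0 - xstar) hg L0 hL.
  rewrite gs0 dotv0l addr0 addrC subrK; lra.
have GL : dotv (gradf x0) (gradf x0) <= L ^+ 2 * dotv (x0 - xstar) (x0 - xstar).
  by have := lip_sq gradf L x0 xstar hL; rewrite gs0 subr0.
have p00 : 0 <= dotv (gradf x0) (x0 - xstar).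
  have := hc x0 xstar.
  rewrite -opprB dotvNr.
  have := sqr_ge0 (enorm (- (x0 - xstar))).
  have : 0 <= m ^+ 2 / 2 by rewrite divr_ge0 // sqr_ge0.
  move=> a1 a2; have a3 := mulr_ge0 a1 a2.
  lra.
have hE0 := @E0_ineq R w m beta z (1 + m * w) L _ _ _ _ w0 m0 (introT andP (conj b0 b1))
  erefl mw1 zc L0 Lw P00 P0L (dotv_ge0 _) GL p00 (dotv_ge0 _).
rewrite -E0e in hE0.
rewrite enorm_sq.
set T := (3 + (2 - beta) ^+ 2) / (2 * w ^+ 2).
set D := dotv (x0 - xstar) (x0 - xstar).
rewrite -(ler_pM2l cpos).
apply: (le_trans cP); apply: (le_trans Et).
have := ler_wpM2r (ltW ex0) hE0.
by rewrite !mulrA.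
Qed.
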